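(* Let $a$ be a positive integer and let $T_{a,a} = \{C_{i,1} : 1 \le i \le 2a+1\} \cup \{C_{a+1,j} : 2 \le j \le a+1\}$, of size $n = 3a+1$. Then on the $n \times n$ board, $\mathrm{cp}_{\mathrm{free}}(T_{a,a}) = 2$.
   Context: For integers $i,j$, $C_{i,j}$ denotes the unit square cell in column $i$ and row $j$ of the integer grid (columns numbered left to right, rows numbered top to bottom). A polyomino is a finite set of cells; its size is its number of cells. For a polyomino $\mathcal{P}$ of size $n$ the board is $\mathbb{B} = \{C_{i,j} : 1 \le i,j \le n\}$. The shift of $\mathcal{P}$ by integers $(c,d)$ is $\mathcal{P}+(c,d) = \{C_{x+c,y+d} : C_{x,y} \in \mathcal{P}\}$. For positive integers $a,b$ and $T_{a,b} = \{C_{i,1} : 1 \le i \le 2a+1\} \cup \{C_{a+1,j} : 2 \le j \le b+1\}$, its rotations by $90^\circ,180^\circ,270^\circ$ clockwise are $TR_{a,b} = \{C_{b+1,i} : 1 \le i \le 2a+1\} \cup \{C_{j,a+1} : 1 \le j \le b\}$, $TR^2_{a,b} = \{C_{i,b+1} : 1 \le i \le 2a+1\} \cup \{C_{a+1,j} : 1 \le j \le b\}$, $TR^3_{a,b} = \{C_{1,i} : 1 \le i \le 2a+1\} \cup \{C_{j,a+1} : 2 \le j \le b+1\}$. A free copy of $T_{a,b}$ is any shift of one of these four. A set of polyominoes is a valid arrangement if each is contained in $\mathbb{B}$ and they are pairwise disjoint. A free packing of $\mathcal{P}$ is a set of free copies of $\mathcal{P}$ forming a valid arrangement such that adding any further free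 copy of $\mathcal{P}$ yields an invalid arrangement. The clumsy free packing number $\mathrm{cp}_{\mathrm{free}}(\mathcal{P})$ is the minimum number of polyominoes in a free packing of $\mathcal{P}$ on the $n \times n$ board. *)

(* Defs.v *)
(* cells are pairs of integers (column, row). *)
From Stdlib Require Import ZArith List Lia.
Open Scope Z_scope.

Definition cell := (Z * Z)%type.

Definition cellset := cell -> Prop.

(* T_{a,b} and its rotations by 90, 180, 270 degrees clockwise. *)
Definition T_ab (a b : Z) : cellset := fun z =>
  (1 <= fst z <= 2*a+1 /\ snd z = 1) \/ (fst z = a+1 /\ 2 <= snd z <= b+1).
Definition TR_ab (a b : Z) : cellset := fun z =>
  (fst z = b+1 /\ 1 <= snd z <= 2*a+1) \/ (1 <= fst z <= b /\ snd z = a+1).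
Definition TR2_ab (a b : Z) : cellset := fun z =>
  (1 <= fst z <= 2*a+1 /\ snd z = b+1) \/ (fst z = a+1 /\ 1 <= snd z <= b).
Definition TR3_ab (a b : Z) : cellset := fun z =>
  (fst z = 1 /\ 1 <= snd z <= 2*a+1) \/ (2 <= fst z <= b+1 /\ snd z = a+1).

Definition rotT (a b : Z) (k : nat) : cellset :=
  match k with
  | 0%nat => T_ab a b
  | 1%nat => TR_ab a b
  | 2%nat => TR2_ab a b
  | _ => TR3_ab a b
  end.

Definition shift (P : cellset) (c d : Z) : cellset :=
  fun z => P (fst z - c, snd z - d).

Definition free_copy (a b : Z) (Q : cellset) : Prop :=
  exists (k : nat) (c d : Z), (k < 4)%nat /\
    forall z, Q z <-> shift (rotT a b k) c d z.

Definition board (n : Z) : cellset := fun z =>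
  1 <= fst z <= n /\ 1 <= snd z <= n.

Definition subset_cells (P Q : cellset) : Prop := forall z, P z -> Q z.
Definition disjoint_cells (P Q : cellset) : Prop := forall z, ~ (P z /\ Q z).

Definition empty_cells : cellset := fun _ => False.

(* A family of polyominoes (listed; distinct positions are distinct members)
   is a valid arrangement on the n x n board: each is contained in the board
   and they are pairwise disjoint. *)
Definition valid_arrangement (n : Z) (L : list cellset) : Prop :=
  (forall Q, In Q L -> subset_cells Q (board n)) /\
  (forall i j : nat, (i < j)%nat -> (j < length L)%nat ->
      disjoint_cells (nth i L empty_cells) (nth j L empty_cells)).

Definition free_packing (a b n : Z) (L : list cellset) : Prop :=
  (forall Q, In Q L -> free_copy a b Q) /\
  valid_arrangement n L /\
  (forall Q, free_copy a b Q -> ~ valid_arrangement n (Q :: L)).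

Definition cp_free_eq (a b n : Z) (m : nat) : Prop :=
  (exists L, free_packing a b n L /\ length L = m) /\
  (forall L, free_packing a b n L -> (m <= length L)%nat).

(* Main.v *)
Require Import Defs.
From Stdlib Require Import ZArith List Lia.
Open Scope Z_scope.
Import Defs.
Import ListNotations.

Ltac un := unfold shift, rotT, T_ab, TR_ab, TR2_ab, TR3_ab, board,
  subset_cells, disjoint_cells in *; cbn [fst snd] in *.

Lemma mk_copy a k c d : (k < 4)%nat -> free_copy a a (shift (rotT a a k) c d).
Proof. intros H; exists k, c, d; split; [exact H| tauto]. Qed.

Lemma valid1 n Q : subset_cells Q (board n) -> valid_arrangement n [Q].
Proof.
  intros H; split.
  - intros Q' [<-|[]]; exact H.
  - intros i j Hij Hj; simpl in Hj; lia.
Qed.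

Lemma valid2 n Q1 Q2 : subset_cells Q1 (board n) -> subset_cells Q2 (board n) ->
  disjoint_cells Q1 Q2 -> valid_arrangement n [Q1; Q2].
Proof.
  intros H1 H2 H; split.
  - intros Q' [<-|[<-|[]]]; assumption.
  - intros i j Hij Hj; simpl in Hj.
    destruct j as [|[|j]]; try lia. destruct i as [|i]; try lia. exact H.
Qed.

Lemma second_copy a (ha : 1 <= a) k c d : (k < 4)%nat ->
  subset_cells (shift (rotT a a k) c d) (board (3*a+1)) ->
  exists k' c' d', (k' < 4)%nat /\
    subset_cells (shift (rotT a a k') c' d') (board (3*a+1)) /\
    disjoint_cells (shift (rotT a a k') c' d') (shift (rotT a a k) c d).
Proof.
  intros Hk Hs.
  destruct k as [|[|[|[|k]]]]; try lia.
  - assert (H1 := Hs (1+c,1+d) ltac:(un; lia)).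
    assert (H2 := Hs (2*a+1+c,1+d) ltac:(un; lia)).
    assert (H3 := Hs (a+1+c,a+1+d) ltac:(un; lia)).
    un.
    destruct (Z_le_gt_dec (a+1) d).
    + exists 0%nat, 0, 0; split; [lia|]; split; un; intros [x y]; cbn [fst snd] in *; lia.
    + destruct (Z.eq_dec c 0).
      * exists 2%nat, 1, (2*a); split; [lia|]; split; un; intros [x y]; cbn [fst snd] in *; lia.
      * exists 2%nat, 0, (2*a); split; [lia|]; split; un; intros [x y]; cbn [fst snd] in *; lia.
  - assert (H1 := Hs (a+1+c,1+d) ltac:(un; lia)).
    assert (H2 := Hs (a+1+c,2*a+1+d) ltac:(un; lia)).
    assert (H3 := Hs (1+c,a+1+d) ltac:(un; lia)).
    un.
    destruct (Z_le_gt_dec a c).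
    + destruct (Z.eq_dec d 0).
      * exists 3%nat, 0, 1; split; [lia|]; split; un; intros [x y]; cbn [fst snd] in *; lia.
      * exists 3%nat, 0, 0; split; [lia|]; split; un; intros [x y]; cbn [fst snd] in *; lia.
    + exists 1%nat, (2*a), 0; split; [lia|]; split; un; intros [x y]; cbn [fst snd] in *; lia.
  - assert (H1 := Hs (1+c,a+1+d) ltac:(un; lia)).
    assert (H2 := Hs (2*a+1+c,a+1+d) ltac:(un; lia)).
    assert (H3 := Hs (a+1+c,1+d) ltac:(un; lia)).
    un.
    destruct (Z_le_gt_dec a d).
    + destruct (Z.eq_dec c 0).
      * exists 0%nat, 1, 0; split; [lia|]; split; un; intros [x y]; cbn [fst snd] in *; lia.
      * exists 0%nat, 0, 0; split; [lia|]; split; un; intros [x y]; cbn [fst snd] in *; lia.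
    + exists 2%nat, 0, (2*a); split; [lia|]; split; un; intros [x y]; cbn [fst snd] in *; lia.
  - assert (H1 := Hs (1+c,1+d) ltac:(un; lia)).
    assert (H2 := Hs (1+c,2*a+1+d) ltac:(un; lia)).
    assert (H3 := Hs (a+1+c,a+1+d) ltac:(un; lia)).
    un.
    destruct (Z_le_gt_dec c a).
    + destruct (Z.eq_dec d 0).
      * exists 1%nat, (2*a), 1; split; [lia|]; split; un; intros [x y]; cbn [fst snd] in *; lia.
      * exists 1%nat, (2*a), 0; split; [lia|]; split; un; intros [x y]; cbn [fst snd] in *; lia.
    + exists 3%nat, 0, 0; split; [lia|]; split; un; intros [x y]; cbn [fst snd] in *; lia.
Qed.

Lemma get_copy a Q : free_copy a a Q ->
  exists k c d, (k < 4)%nat /\ forall z, Q z <-> shift (rotT a a k) c d z.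
Proof. intros H; exact H. Qed.

Theorem theorem8 (a : Z) (ha : 1 <= a) :
  cp_free_eq a a (3*a+1) 2%nat.
Proof.
  split.
  - set (A := shift (rotT a a 0) 0 (a-1)).
    set (B := shift (rotT a a 0) a (2*a)).
    exists [A; B]; split; [|reflexivity].
    split; [|split].
    + intros Q [<-|[<-|[]]]; apply mk_copy; lia.
    + apply valid2; subst A B; un; intros [x y]; cbn [fst snd] in *; lia.
    + intros Q HQ [Hsub Hd].
      assert (DA : disjoint_cells Q A) by (apply (Hd 0%nat 1%nat); simpl; lia).
      assert (DB : disjoint_cells Q B) by (apply (Hd 0%nat 2%nat); simpl; lia).
      assert (Hs : subset_cells Q (board (3*a+1))) by (apply Hsub; left; reflexivity).
      clear Hd Hsub.
      destruct (get_copy a Q HQ) as [k [c [d [Hk HQe]]]].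
      assert (E : forall z, Q z -> A z -> False) by (intros z h1 h2; exact (DA z (conj h1 h2))).
      assert (F : forall z, Q z -> B z -> False) by (intros z h1 h2; exact (DB z (conj h1 h2))).
      clear DA DB HQ.
      subst A B.
      destruct k as [|[|[|[|k]]]]; try lia.
      * assert (H1 := Hs (1+c,1+d) ltac:(apply HQe; un; lia)).
        assert (H2 := Hs (2*a+1+c,1+d) ltac:(apply HQe; un; lia)).
        assert (H3 := Hs (a+1+c,a+1+d) ltac:(apply HQe; un; lia)).
        un.
        destruct (Z_le_gt_dec d (a-2)).
        { apply (E (a+1+c, a)); [apply HQe|]; un; lia. }
        destruct (Z.eq_dec d (a-1)).
        { apply (E (a+1, a)); [apply HQe|]; un; lia. }
        destruct (Z_le_gt_dec d (2*a-1)).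
        { apply (E (a+1, d+1)); [apply HQe|]; un; lia. }
        { apply (F (2*a+1, 2*a+1)); [apply HQe|]; un; lia. }
      * assert (H1 := Hs (a+1+c,1+d) ltac:(apply HQe; un; lia)).
        assert (H2 := Hs (a+1+c,2*a+1+d) ltac:(apply HQe; un; lia)).
        assert (H3 := Hs (1+c,a+1+d) ltac:(apply HQe; un; lia)).
        un.
        apply (F (c+a+1, 2*a+1)); [apply HQe|]; un; lia.
      * assert (H1 := Hs (1+c,a+1+d) ltac:(apply HQe; un; lia)).
        assert (H2 := Hs (2*a+1+c,a+1+d) ltac:(apply HQe; un; lia)).
        assert (H3 := Hs (a+1+c,1+d) ltac:(apply HQe; un; lia)).
        un.
        destruct (Z_le_gt_dec d (a-1)).
        { apply (E (a+1, a+1+d)); [apply HQe|]; un; lia. }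
        { apply (F (2*a+1, a+1+d)); [apply HQe|]; un; lia. }
      * assert (H1 := Hs (1+c,1+d) ltac:(apply HQe; un; lia)).
        assert (H2 := Hs (1+c,2*a+1+d) ltac:(apply HQe; un; lia)).
        assert (H3 := Hs (a+1+c,a+1+d) ltac:(apply HQe; un; lia)).
        un.
        destruct (Z_le_gt_dec a c).
        { apply (F (c+1, 2*a+1)); [apply HQe|]; un; lia. }
        destruct (Z_le_gt_dec d (a-1)).
        { apply (E (c+1, a)); [apply HQe|]; un; lia. }
        { apply (F (c+a+1, 2*a+1)); [apply HQe|]; un; lia. }
  - intros L [Hc [Hv Hm]].
    destruct L as [|Q [|Q2 L]]; simpl; try lia.
    + exfalso. apply (Hm (shift (rotT a a 0) 0 0)); [apply mk_copy; lia|].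
      apply valid1; un; intros [x y]; cbn [fst snd] in *; lia.
    + exfalso.
      destruct (get_copy a Q (Hc Q (or_introl eq_refl))) as [k [c [d [Hk HQe]]]].
      assert (Hs : subset_cells Q (board (3*a+1))) by (apply (proj1 Hv); left; reflexivity).
      assert (Hs' : subset_cells (shift (rotT a a k) c d) (board (3*a+1))).
      { intros z hz; apply Hs, HQe, hz. }
      destruct (second_copy a ha k c d Hk Hs') as [k' [c' [d' [Hk' [Hs2 Hd2]]]]].
      apply (Hm (shift (rotT a a k') c' d')); [apply mk_copy; exact Hk'|].
      apply valid2; [exact Hs2|exact Hs|].
      intros z [h1 h2]; apply (Hd2 z); split; [exact h1| apply HQe, h2].
Qed.
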